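(* Let $\Gamma=\langle V,(w_u)_{u\in V},\alpha,\beta\rangle$ be a star celebrity game with $\beta>1$. If $T$ is a Nash equilibrium graph of $\Gamma$ that is a tree, then $\mathrm{diam}(T)\le\beta+1$.
   Context: A celebrity game $\Gamma=\langle V,(w_u)_{u\in V},\alpha,\beta\rangle$ consists of a set of players $V=\{1,\dots,n\}$, celebrity weights $w_u>0$, a link cost $\alpha>0$ and a critical distance $\beta$ with $1\le\beta\le n-1$. A strategy of player $u$ is a set $S_u\subseteq V\setminus\{u\}$; a strategy profile is $S=(S_1,\dots,S_n)$; its outcome graph $G[S]$ is the undirected graph on $V$ with edge set $\{\{u,v\}: u\in S_v\text{ or }v\in S_u\}$. With $d_G$ the graph distance (infinite between different connected components), the cost of player $u$ is $c_u(S)=\alpha|S_u|+\sum_{v:\,d_{G[S]}(u,v)>\beta}w_v$. $S$ is a Nash equilibrium if no player can strictly decrease its cost by changing only its own strategy; a graph $G$ is a Nash equilibrium graph if $G=G[S]$ for some Nash equilibrium $S$. $\Gamma$ is a star celebrity game if it has a Nash equilibrium graph that is connected. $\mathrm{diam}(T)=\max_{u,v}d_T(u,v)$. *)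

(* Defs.v *)
From mathcomp Require Import all_boot all_order all_algebra.
Set Implicit Arguments. Unset Strict Implicit. Unset Printing Implicit Defensive.
Import Order.TTheory GRing.Theory Num.Theory.
Local Open Scope ring_scope.

(* Players are V = 'I_n.  A graph on V is a relation G : rel 'I_n
   (outcome graphs are symmetric and irreflexive). *)

(* dist_le G k u v  <=>  d_G(u,v) <= k, i.e. there is a walk of length at most k
   from u to v (d_G = +infinity between different components). *)
Fixpoint dist_le n (G : rel 'I_n) (k : nat) (u v : 'I_n) : bool :=
  match k with
  | 0 => u == v
  | k'.+1 => dist_le G k' u v || [exists w, dist_le G k' u w && G w v]
  end.

Definition profile n := 'I_n -> {set 'I_n}.

Definition valid_strategy n (u : 'I_n) (A : {set 'I_n}) : Prop := u \notin A.
Definition valid_profile n (S : profile n) : Prop := forall u, valid_strategy u (S u).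

Definition outcome n (S : profile n) : rel 'I_n :=
  fun u v => (u \in S v) || (v \in S u).

Definition cost (R : realFieldType) n (w : 'I_n -> R) (alpha : R) (beta : nat)
  (S : profile n) (u : 'I_n) : R :=
  alpha * (#|S u|)%:R + \sum_(v | ~~ dist_le (outcome S) beta u v) w v.

Definition deviate n (S : profile n) (u : 'I_n) (A : {set 'I_n}) : profile n :=
  fun v => if v == u then A else S v.

Definition nash (R : realFieldType) n (w : 'I_n -> R) (alpha : R) (beta : nat)
  (S : profile n) : Prop :=
  valid_profile S /\
  forall u (A : {set 'I_n}), valid_strategy u A ->
    cost w alpha beta S u <= cost w alpha beta (deviate S u A) u.

Definition nash_graph (R : realFieldType) n (w : 'I_n -> R) (alpha : R) (beta : nat)
  (G : rel 'I_n) : Prop :=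
  exists S : profile n, nash w alpha beta S /\ G =2 outcome S.

Definition connected_graph n (G : rel 'I_n) : Prop :=
  forall u v, exists k, dist_le G k u v.

Definition acyclic_graph n (G : rel 'I_n) : Prop :=
  forall (x : 'I_n) (s : seq 'I_n),
    uniq (x :: s) -> (2 <= size s)%N -> path G x s -> ~~ G (last x s) x.

Definition is_tree n (G : rel 'I_n) : Prop := connected_graph G /\ acyclic_graph G.

Definition star_celebrity_game (R : realFieldType) n (w : 'I_n -> R) (alpha : R)
  (beta : nat) : Prop :=
  exists G, nash_graph w alpha beta G /\ connected_graph G.

Definition diam_le n (G : rel 'I_n) (k : nat) : Prop :=
  forall u v, dist_le G k u v.

(* Main.v *)
Require Import Defs.
From mathcomp Require Import all_boot all_order all_algebra.
From mathcomp Require Import lra.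
Import Order.TTheory GRing.Theory Num.Theory.
Module Aux.
Set Implicit Arguments. Unset Strict Implicit.


Section G.
Variable n : nat.
Implicit Types (F G : rel 'I_n).

Lemma dl_S F k u v : dist_le F k u v -> dist_le F k.+1 u v.
Proof. by move=> h /=; rewrite h. Qed.

Lemma dl_mono F k m u v : (k <= m)%N -> dist_le F k u v -> dist_le F m u v.
Proof.
move=> /subnKC <-; elim: (m - k)%N => [|d IH]; first by rewrite addn0.
by move=> h; rewrite addnS; apply/dl_S/IH.
Qed.

Lemma dl_refl F k u : dist_le F k u u.
Proof. by apply: (@dl_mono _ 0) => //=. Qed.

Lemma dl_edge F k u v : (1 <= k)%N -> F u v -> dist_le F k u v.
Proof.
move=> hk e; apply: (dl_mono hk) => /=; apply/orP; right.
by apply/existsP; exists u; rewrite e eqxx.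
Qed.

Lemma dl_snoc F k u x v : dist_le F k u x -> F x v -> dist_le F k.+1 u v.
Proof. by move=> h e /=; apply/orP; right; apply/existsP; exists x; rewrite h e. Qed.

Lemma dl_cons F k w u v : F w u -> dist_le F k u v -> dist_le F k.+1 w v.
Proof.
elim: k v => [|k IH] v e.
  by move/eqP=> <- /=; apply/orP; right; apply/existsP; exists w; rewrite eqxx e.
case/orP=> [h|/existsP [x /andP [h1 h2]]].
  by apply/dl_S; apply: IH.
by apply: dl_snoc h2; apply: IH.
Qed.

Lemma dl_sym F k u v : symmetric F -> dist_le F k u v -> dist_le F k v u.
Proof.
move=> sF; elim: k v => [|k IH] v; first by rewrite /= eq_sym.
case/orP=> [h|/existsP [x /andP [h1 h2]]]; first by apply/dl_S/IH.
by apply: (dl_cons (u:=x)); [rewrite sF | apply: IH].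
Qed.

Lemma dl_decomp F k u v : dist_le F k.+1 u v ->
  u = v \/ exists y, F u y /\ dist_le F k y v.
Proof.
elim: k v => [|k IH] v.
  case/orP=> [/eqP->|/existsP [x /andP [/eqP <- h]]]; first by left.
  by right; exists v; rewrite /= h eqxx.
case/orP=> [/IH [->|[y [e hy]]]|/existsP [x /andP [h1 h2]]]; first by left.
  by right; exists y; split=> //; apply: dl_S.
case: (IH _ h1) => [ex|[y [e hy]]].
  by subst x; right; exists v; split => //; apply: dl_refl.
by right; exists y; split => //; apply: dl_snoc h2.
Qed.

Lemma dl_sub F1 F2 k u v : (forall x y, F1 x y -> F2 x y) ->
  dist_le F1 k u v -> dist_le F2 k u v.
Proof.
move=> s; elim: k v => [|k IH] v //.
case/orP=> [h|/existsP [x /andP [h1 h2]]]; first by apply/dl_S/IH.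
by apply: dl_snoc (IH _ h1) (s _ _ h2).
Qed.

Lemma dl_eq F1 F2 k u v : F1 =2 F2 -> dist_le F1 k u v = dist_le F2 k u v.
Proof.
move=> e; apply/idP/idP; apply: dl_sub => x y.
  by rewrite e.
by rewrite e.
Qed.

Definition Ha F (a : 'I_n) : rel 'I_n := fun u v => [&& F u v, u != a & v != a].

Lemma dl_Ha F a c : (forall x, F a x || F x a -> x = c) -> c != a ->
  forall k u, u != a ->
  (forall v, v != a -> dist_le F k u v -> dist_le (Ha F a) k u v) /\
  (dist_le F k u a -> dist_le (Ha F a) k.-1 u c).
Proof.
move=> hc ca; elim=> [|k IH] u ua.
  split=> [v _ //|/= /eqP e]; by rewrite e eqxx in ua.
have [IH1 IH2] := IH u ua; split.
  move=> v va /orP [h|/existsP [x /andP [h1 h2]]]; first by apply/dl_S/IH1.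
  have [xa|xa] := eqVneq x a.
    subst x; have vc : v = c by apply: hc; rewrite h2.
    subst v; apply: (@dl_mono _ k.-1); first by rewrite leqW // leq_pred.
    by apply: IH2.
  by apply: dl_snoc (IH1 _ xa h1) _; rewrite /Ha h2 xa va.
move=> /orP [h|/existsP [x /andP [h1 h2]]].
  by apply: (@dl_mono _ k.-1); [rewrite leq_pred | apply: IH2].
have xc : x = c by apply: hc; rewrite h2 orbT.
by subst x; apply: IH1.
Qed.

Lemma dl_Ha_eq F a c k u v : (forall x, F a x || F x a -> x = c) -> c != a ->
  u != a -> v != a -> dist_le (Ha F a) k u v = dist_le F k u v.
Proof.
move=> hc ca ua va; apply/idP/idP.
  by apply: dl_sub => x y /andP [].
by have [h _] := dl_Ha hc ca k ua; apply: h.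
Qed.

Lemma dl_isol F a k u : (forall x, ~~ F x a) -> u != a -> ~~ dist_le F k u a.
Proof.
move=> h ua; elim: k => [|k IH] /=; first by rewrite (negbTE ua).
rewrite negb_or IH /= negb_exists; apply/forallP => x.
by rewrite (negbTE (h x)) andbF.
Qed.

Lemma dl_leaf F a c k v : symmetric F -> (forall x, F a x = (x == c)) -> c != a ->
  v != a -> dist_le F k.+1 a v = dist_le F k c v.
Proof.
move=> sF hF ca va; apply/idP/idP.
  case/dl_decomp => [e|[y [e h]]]; first by rewrite e eqxx in va.
  by move: e; rewrite hF => /eqP <-.
by apply: dl_cons; rewrite hF.
Qed.

End G.



Section T.
Variable n : nat.
Implicit Types (F G : rel 'I_n).

Lemma avoid F a k u v : dist_le F k u v -> u != a -> ~~ dist_le F k.-1 a v ->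
  connect (Ha F a) u v.
Proof.
elim: k u => [|k IH] u.
  by move=> /eqP -> _ _; apply: connect0.
case/dl_decomp => [->|[y [e h]]] ua nh; first by apply: connect0.
have ya : y != a.
  by apply/eqP=> ya; subst y; rewrite h in nh.
apply: (connect_trans (y:=y)); first by apply: connect1; rewrite /Ha e ua ya.
apply: IH => //; apply: contra nh; apply: dl_mono; exact: leq_pred.
Qed.

Lemma path_avoid F a y p : path (Ha F a) y p -> all (fun v => v != a) p.
Proof.
elim: p y => [|z p IH] y //= /andP [/and3P [_ _ za] h].
by rewrite za (IH z h).
Qed.

Lemma no_cycle F a y y' : acyclic_graph F -> symmetric F -> F a y -> F a y' ->
  y != y' -> connect (Ha F a) y y' -> False.
Proof.
move=> ac sF ey ey' yy /connectP [p hp e]; subst y'.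
move: yy ey'; case: (shortenP hp) => p' hp' up' _ yy ey'.
move=> {hp}.
have av := path_avoid hp'.
have ya : y != a.
  move: hp' yy; case: p' {up' av ey'} => [|z q] /=; first by rewrite eqxx.
  by case/andP=> /and3P [].
have hG : path F y p' by apply: sub_path hp' => u v /and3P [].
have := ac a (y :: p').
have ne : p' != [::].
  by apply/eqP=> e; move: yy; rewrite e /= eqxx.
have -> : uniq (a :: y :: p').
  rewrite cons_uniq up' andbT in_cons negb_or eq_sym ya /=.
  by apply/negP=> h; move/allP: av => /(_ a h); rewrite eqxx.
have -> : (2 <= size (y :: p'))%N by case: p' ne {hp' up' av hG ey' yy}.
rewrite /= ey hG /= => /(_ isT isT isT).
by rewrite sF ey'.
Qed.

Lemma leaf_ex F a b k : symmetric F -> (forall x, F x x = false) ->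
  acyclic_graph F -> (1 <= k)%N ->
  (forall u v, dist_le F k.+1 u v) -> ~~ dist_le F k a b ->
  exists a1, [/\ forall x, F a x = (x == a1), a1 != a & ~~ dist_le F k.-1 a1 b].
Proof.
move=> sF irr ac k1 all nd.
case: (dl_decomp (all a b)) => [e|[y [e h]]].
  by subst b; rewrite dl_refl in nd.
have ya : y != a by apply/eqP=> ya; subst y; rewrite irr in e.
exists y; split => //.
- move=> x; apply/idP/idP; last by move/eqP ->.
  move=> ex; apply/negPn/negP => xy.
  have xa : x != a by apply/eqP=> xa; subst x; rewrite irr in ex.
  have c1 : connect (Ha F a) y b.
    by apply: avoid (dl_S h) ya nd.
  have c2 : connect (Ha F a) x b.
    by apply: avoid (all x b) xa nd.
  have yx : y != x by rewrite eq_sym.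
  apply: (no_cycle ac sF e ex yx).
  apply: (connect_trans c1).
  have sH : symmetric (Ha F a).
    by move=> u v; rewrite /Ha sF; case: (u != a); case: (v != a); rewrite ?andbF ?andbT.
  by rewrite (sym_connect_sym sH).
- apply: contra nd => h'.
  by have := dl_cons e h'; rewrite prednK.
Qed.

End T.




Local Open Scope ring_scope.
Lemma sym_out n (S0 : profile n) : symmetric (outcome S0).
Proof. by move=> u v; rewrite /outcome orbC. Qed.

Section NE.
Variables (R : realFieldType) (n : nat) (w : 'I_n -> R) (alpha : R) (beta : nat).
Variable S : profile n.
Hypothesis wpos : forall u, 0 < w u.
Hypothesis apos : 0 < alpha.
Hypothesis b2 : (2 <= beta)%N.
Hypothesis ne : nash w alpha beta S.

Notation G := (outcome S).

Lemma be1 : (1 <= beta)%N. Proof. exact: ltnW. Qed.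
Lemma bp : (1 <= beta.-1)%N. Proof. by rewrite -ltnS prednK // be1. Qed.

Lemma symG : symmetric G.
Proof. by move=> u v; rewrite /outcome orbC. Qed.

Lemma irrG x : G x x = false.
Proof. by rewrite /outcome orbb; apply/negbTE; case: ne => vp _; apply: vp. Qed.

Lemma sum_split (P : pred 'I_n) a (f : 'I_n -> R) :
  \sum_(v | P v) f v = (if P a then f a else 0) + \sum_(v | v != a) (if P v then f v else 0).
Proof. by rewrite big_mkcond (bigD1 a) //=. Qed.

Lemma not_owned a a1 b : (forall x, G a x = (x == a1)) -> a1 != a ->
  ~~ dist_le G beta b a -> ~~ dist_le G beta b a1 -> a \notin S a1.
Proof.
move=> leaf a1a nba nba1; apply/negP => h.
have [vp nh] := ne.
have ba : b != a by apply: contra nba => /eqP ->; apply: dl_refl.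
have ba1 : b != a1 by apply: contra nba1 => /eqP ->; apply: dl_refl.
have Gaa1 : G a a1 by rewrite leaf.
have aSb : a \notin S b.
  apply/negP=> h'; have : G a b by rewrite /outcome h'.
  by rewrite leaf (negbTE ba1).
have hB : w a + w a1 <= alpha.
  have vA : valid_strategy b (a |: S b).
    by rewrite /valid_strategy in_setU1 negb_or ba; apply: vp.
  have := nh b _ vA; rewrite /cost.
  have -> : deviate S b (a |: S b) b = a |: S b by rewrite /deviate eqxx.
  rewrite cardsU1 aSb.
  set G' := outcome (deviate _ _ _).
  have sub : forall x y, G x y -> G' x y.
    move=> x y; rewrite /G' /outcome /deviate.
    case: (eqVneq y b) => [->|_]; case: (eqVneq x b) => [->|_];
      by rewrite ?in_setU1; case/orP=> ->; rewrite ?orbT.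
  have G'ba : G' b a by rewrite /G' /outcome /deviate eqxx in_setU1 eqxx orbT.
  have d1 : dist_le G' beta b a by apply: dl_edge => //; apply: be1.
  have d2 : dist_le G' beta b a1.
    rewrite -(prednK be1); apply: dl_cons G'ba _.
    by apply: dl_edge; [apply: bp | apply: sub].
  rewrite (bigID (fun v => ~~ dist_le G' beta b v)) /=.
  have -> : \sum_(i | ~~ dist_le G beta b i && ~~ dist_le G' beta b i) w i =
            \sum_(i | ~~ dist_le G' beta b i) w i.
    apply: eq_bigl => v; apply/andP/idP => [[]//|h2]; split=> //.
    by apply: contra h2; apply: dl_sub.
  have : w a + w a1 <= \sum_(i | ~~ dist_le G beta b i && ~~ ~~ dist_le G' beta b i) w i.
    rewrite (bigD1 a) /=; last by rewrite nba d1.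
    rewrite (bigD1 a1) /=; last by rewrite nba1 d2 a1a.
    rewrite addrA lerDl; apply: sumr_ge0 => i _; exact: ltW.
  rewrite natrD; lra.
have hA : alpha <= w a.
  have vA : valid_strategy a1 (S a1 :\ a).
    by rewrite /valid_strategy in_setD1 negb_and vp orbT.
  have := nh a1 _ vA; rewrite /cost.
  have -> : deviate S a1 (S a1 :\ a) a1 = S a1 :\ a by rewrite /deviate eqxx.
  rewrite (cardsD1 a (S a1)) h -[(true + _)%N]/(1 + _)%N natrD.
  set G' := outcome (deviate _ _ _).
  case: (boolP (a1 \in S a)) => ha1.
    have eG : G' =2 G.
      move=> x y; rewrite /G' /outcome /deviate.
      case: (eqVneq y a1) => [->|ya1]; case: (eqVneq x a1) => [->|xa1];
        rewrite ?in_setD1 //.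
      - by rewrite a1a.
      - case: (eqVneq x a) => [->|] //=; by rewrite ha1 h orbT.
      - case: (eqVneq y a) => [->|] //=; by rewrite ha1 h.
    have -> : \sum_(v | ~~ dist_le G' beta a1 v) w v = \sum_(v | ~~ dist_le G beta a1 v) w v.
      by apply: eq_bigl => v; rewrite (dl_eq _ _ _ eG).
    rewrite mulrDr mulr1; set K := alpha * _; set L := \sum_(v | _) _.
move=> H; have := apos; lra.
  have eH : Ha G' a =2 Ha G a.
    move=> x y; rewrite /Ha; case: (eqVneq x a) => //= xa; case: (eqVneq y a) => //= ya;
      rewrite ?andbT ?andbF //.
    rewrite /G' /outcome /deviate.
    by case: (eqVneq y a1) => [->|_]; case: (eqVneq x a1) => [->|_]; rewrite ?in_setD1 ?xa ?ya ?a1a.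
  have iso : forall x, ~~ G' x a.
    have aa1 : (a == a1) = false by rewrite eq_sym (negbTE a1a).
    move=> x; rewrite /G' /outcome /deviate aa1.
    case: (eqVneq x a1) => [->|xa1]; first by rewrite in_setD1 eqxx (negbTE ha1).
    apply/negP => /orP [h'|h'].
      by move: (xa1); rewrite -leaf /outcome h' orbT.
    by move: (xa1); rewrite -leaf /outcome h'.
  have eq1 : forall v, v != a -> dist_le G' beta a1 v = dist_le G beta a1 v.
    move=> v va.
    rewrite -(@dl_Ha_eq _ G' a a1) //; last first.
      by move=> x; have := iso x; rewrite /G' sym_out orbb => /negbTE ->.
    rewrite (dl_eq _ _ _ eH) (@dl_Ha_eq _ G a a1) //.
    by move=> x; rewrite [G x a]symG orbb leaf => /eqP.
  rewrite (sum_split _ a) [in X in _ <= X](sum_split _ a).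
  have i1 : ~~ dist_le G' beta a1 a by apply: dl_isol.
  have e1 : dist_le G beta a1 a by apply: dl_edge be1 _; rewrite symG.
  rewrite i1 e1 /=.
  have -> : \sum_(v | v != a) (if ~~ dist_le G' beta a1 v then w v else 0) =
     \sum_(v | v != a) (if ~~ dist_le G beta a1 v then w v else 0).
    by apply: eq_bigr => v va; rewrite eq1.
  rewrite mulrDr mulr1; set K := alpha * _; set L := \sum_(v | _) _.
  move=> H; lra.
have := wpos a1; lra.
Qed.

Definition Fc c (v : 'I_n) : R := if dist_le G beta.-1 c v then 0 else w v.

Lemma swap a a1 b1 : (forall x, G a x = (x == a1)) -> a1 != a ->
  a \notin S a1 -> b1 != a ->
  \sum_(v | v != a) Fc a1 v <= \sum_(v | v != a) Fc b1 v.
Proof.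
move=> leaf a1a naS b1a.
have [vp nh] := ne.
have nS : forall x, a \notin S x.
  move=> x; apply/negP => h.
  have : G a x by rewrite /outcome h.
  rewrite leaf => /eqP ex; subst x; by rewrite h in naS.
have Sa : S a = [set a1].
  apply/setP => x; rewrite in_set1; apply/idP/idP.
    by move=> h; rewrite -leaf /outcome h orbT.
  by move/eqP ->; have := leaf a1; rewrite eqxx /outcome (negbTE naS).
have vA : valid_strategy a [set b1] by rewrite /valid_strategy in_set1 eq_sym.
have := nh a _ vA; rewrite /cost.
have -> : deviate S a [set b1] a = [set b1] by rewrite /deviate eqxx.
rewrite Sa !cards1.
set G' := outcome (deviate _ _ _).
have leaf' : forall x, G' a x = (x == b1).
  move=> x; rewrite /G' /outcome /deviate eqxx in_set1.
  case: (eqVneq x a) => [xa|xa].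
    by subst x; rewrite in_set1 eq_sym (negbTE b1a) /=.
  by rewrite (negbTE (nS x)).
have eH : Ha G' a =2 Ha G a.
  move=> x y; rewrite /Ha; case: (eqVneq x a) => //= xa; case: (eqVneq y a) => //= ya;
    rewrite ?andbT ?andbF //.
  by rewrite /G' /outcome /deviate (negbTE xa) (negbTE ya).
have hl : forall x, G a x || G x a -> x = a1.
  by move=> x; rewrite [G x a]symG orbb leaf => /eqP.
have hl' : forall x, G' a x || G' x a -> x = b1.
  by move=> x; rewrite /G' [outcome _ x a]sym_out orbb -/G' leaf' => /eqP.
have bb : beta = beta.-1.+1 by rewrite prednK // be1.
have e1 : forall v, v != a -> dist_le G beta a v = dist_le G beta.-1 a1 v.
  move=> v va; rewrite {1}bb (dl_leaf _ symG leaf a1a va).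
  by [].
have e2 : forall v, v != a -> dist_le G' beta a v = dist_le G beta.-1 b1 v.
  move=> v va; rewrite {1}bb (dl_leaf _ (@sym_out _ _) leaf' b1a va).
  rewrite -(dl_Ha_eq _ hl' b1a b1a va) (dl_eq _ _ _ eH).
  by rewrite (dl_Ha_eq _ hl a1a b1a va).
rewrite (sum_split _ a) [in X in _ <= X](sum_split _ a) !dl_refl /=.
have -> : \sum_(v | v != a) (if ~~ dist_le G' beta a v then w v else 0) =
   \sum_(v | v != a) Fc b1 v.
  by apply: eq_bigr => v va; rewrite e2 // /Fc; case: dist_le.
have -> : \sum_(v | v != a) (if ~~ dist_le G beta a v then w v else 0) =
   \sum_(v | v != a) Fc a1 v.
  by apply: eq_bigr => v va; rewrite e1 // /Fc; case: dist_le.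
set K := \sum_(v | _) _; set L := \sum_(v | _) _.
move=> H; lra.
Qed.

End NE.

End Aux.
Import Aux.
Local Open Scope ring_scope.


Theorem proposition9 (R : realFieldType) (n : nat) (w : 'I_n -> R) (alpha : R)
  (beta : nat) :
  (forall u, 0 < w u) -> 0 < alpha -> (1 <= beta)%N -> (beta <= n.-1)%N ->
  star_celebrity_game w alpha beta -> (1 < beta)%N ->
  forall T : rel 'I_n, nash_graph w alpha beta T -> is_tree T ->
  diam_le T beta.+1.
Proof.
move=> wpos apos _ _ _ b2 T [S [ne eT]] [conT acT].
set G := outcome S.
have dT : forall k u v, dist_le T k u v = dist_le G k u v.
  by move=> k u v; apply: dl_eq.
have conG : forall u v, exists k, dist_le G k u v.
  by move=> u v; have [k h] := conT u v; exists k; rewrite -dT.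
have acG : acyclic_graph G.
  move=> x s us ss; rewrite /G -(eq_path eT) -eT; exact: acT.
have sG : symmetric G := sym_out S.
have irr := irrG ne.
move=> u v; rewrite dT; apply/negPn/negP => hn.
have exK : exists k, [forall x, [forall y, dist_le G k x y]].
  exists (\max_(p : 'I_n * 'I_n) xchoose (conG p.1 p.2))%N.
  apply/forallP => x; apply/forallP => y.
  apply: (dl_mono _ (xchooseP (conG x y))).
  exact: (leq_bigmax (x, y)).
case: (ex_minnP exK) => D PD minD.
have Dge : (beta.+2 <= D)%N.
  rewrite ltnNge; apply/negP => hD; move/forallP: PD => /(_ u) /forallP /(_ v) h.
  by rewrite (dl_mono hD h) in hn.
set k := D.-1.
have Dk : D = k.+1 by rewrite prednK // (leq_trans _ Dge).
have kb : (beta.+1 <= k)%N by rewrite -ltnS -Dk.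
have nPk : ~~ [forall x, [forall y, dist_le G k x y]].
  by apply/negP => h; have := minD k h; rewrite Dk ltnn.
move: nPk; rewrite negb_forall => /existsP [a]; rewrite negb_forall => /existsP [b nab].
have allk : forall x y, dist_le G k.+1 x y.
  by move=> x y; rewrite -Dk; move/forallP: PD => /(_ x) /forallP; apply.
have k1 : (1 <= k)%N by apply: leq_trans kb.
have [a1 [la a1a na1]] := leaf_ex sG irr acG k1 allk nab.
have nba : ~~ dist_le G k b a by apply: contra nab; apply: dl_sym.
have [b1 [lb b1b nb1]] := leaf_ex sG irr acG k1 allk nba.
have nmono : forall m m' x y, (m <= m')%N -> ~~ dist_le G m' x y -> ~~ dist_le G m x y.
  by move=> m m' x y hm; apply: contra; apply: dl_mono.
have hbk : (beta <= k.-1)%N by rewrite -ltnS prednK.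
have hbk' : (beta.-1 <= k.-1)%N by apply: leq_trans (leq_pred _) hbk.
have na1b := nmono _ _ _ _ hbk na1.
have nb1a := nmono _ _ _ _ hbk nb1.
have na1b' := nmono _ _ _ _ hbk' na1.
have nb1a' := nmono _ _ _ _ hbk' nb1.
have nba_b := nmono beta _ _ _ (leq_trans (leqnSn _) kb) nba.
have nab_b := nmono beta _ _ _ (leq_trans (leqnSn _) kb) nab.
have nba1 : ~~ dist_le G beta b a1 by apply: contra na1b; apply: dl_sym.
have nab1 : ~~ dist_le G beta a b1 by apply: contra nb1a; apply: dl_sym.
have o1 := not_owned wpos apos b2 ne la a1a nba_b nba1.
have o2 := not_owned wpos apos b2 ne lb b1b nab_b nab1.
have b1a : b1 != a by apply: contra nb1a => /eqP ->; apply: dl_refl.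
have a1b : a1 != b by apply: contra na1b => /eqP ->; apply: dl_refl.
have s1 := swap b2 ne la a1a o1 b1a.
have s2 := swap b2 ne lb b1b o2 a1b.
have E : forall c x, \sum_v Fc w beta S c v = Fc w beta S c x + \sum_(v | v != x) Fc w beta S c v.
  by move=> c x; rewrite (bigD1 x).
have f1 : Fc w beta S a1 a = 0.
  by rewrite /Fc (dl_edge (bp b2)) // sym_out; move: (la a1); rewrite eqxx.
have f2 : Fc w beta S b1 b = 0.
  by rewrite /Fc (dl_edge (bp b2)) // sym_out; move: (lb b1); rewrite eqxx.
have f3 : Fc w beta S b1 a = w a by rewrite /Fc (negbTE nb1a').
have f4 : Fc w beta S a1 b = w b by rewrite /Fc (negbTE na1b').
have := E a1 a; have := E a1 b; have := E b1 a; have := E b1 b.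
rewrite f1 f2 f3 f4.
have := wpos a; have := wpos b.
move: s1 s2.
set X1 := \sum_(v | v != a) Fc w beta S a1 v.
set X2 := \sum_(v | v != a) Fc w beta S b1 v.
set Y1 := \sum_(v | v != b) Fc w beta S a1 v.
set Y2 := \sum_(v | v != b) Fc w beta S b1 v.
set Z1 := \sum_v Fc w beta S a1 v.
set Z2 := \sum_v Fc w beta S b1 v.
lra.
Qed.
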